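(* Let $\mathcal{X}$ be a finite alphabet and let $P_0,P_1$ be probability mass functions on $\mathcal{X}$ with the same support $\mathcal{X}$. Let $n>1$, $k^\star\in(1,n]$ an integer, and $\mathcal{D}=(x_1,\dots,x_n)$ a random dataset with independent entries, $x_1,\dots,x_{k^\star-1}\sim P_0$ and $x_{k^\star},\dots,x_n\sim P_1$. Let $\hat k\in\arg\max_{k\in[n]}\sum_{i=k}^n\log\frac{P_1(x_i)}{P_0(x_i)}$. Let $s=\max_{x}\log\frac{P_1(x)}{P_0(x)}-\min_{x}\log\frac{P_1(x)}{P_0(x)}$ and $C=\min\{D_{\mathrm{KL}}(P_0\|P_1),D_{\mathrm{KL}}(P_1\|P_0)\}$. Then for every $\alpha\in[n]$, the estimator is $(\alpha,\beta)$-accurate with $$\beta\le 2\min\Big\{\frac{t(1-t^M)}{1-t};\ \exp\big(-\alpha I_{ch}(P_0,P_1)\big)\Big\},$$ where $t=\exp(-\alpha C^2/s^2)$ and $M=\lfloor\frac{n-1}{\alpha}\rfloor$.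
   Context: $[a]=\{1,\dots,a\}$; natural logarithms. $(\alpha,\beta)$-accurate means $\mathbb{P}\{\hat k\notin[k^\star-\alpha,k^\star+\alpha]\}=\beta$ (so the claim bounds this probability). Chernoff information: $I_{ch}(P_0,P_1)=-\min_{\lambda\in(0,1)}\log\big(\sum_{x}P_0(x)^\lambda P_1(x)^{1-\lambda}\big)$. *)

(* Defs.v *)
From HB Require Import structures.
From mathcomp Require Import all_boot all_order all_algebra.
From mathcomp Require Import all_classical all_reals all_analysis.
Set Implicit Arguments. Unset Strict Implicit. Unset Printing Implicit Defensive.
Import Order.TTheory GRing.Theory Num.Theory.
Local Open Scope ring_scope.
Local Open Scope classical_set_scope.

Section ChangePoint.
Variables (R : realType) (X : finType).

Definition full_pmf (P : X -> R) : Prop :=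
  (forall x, 0 < P x) /\ \sum_(x : X) P x = 1.

Definition llr (P0 P1 : X -> R) (x : X) : R := ln (P1 x / P0 x).

Definition KL (P Q : X -> R) : R := \sum_(x : X) P x * ln (P x / Q x).

(* s = max_x llr - min_x llr, written as max_{x,y} (llr x - llr y) (>= 0) *)
Definition llr_span (P0 P1 : X -> R) : R :=
  \big[Num.max/0]_(x : X) \big[Num.max/0]_(y : X) (llr P0 P1 x - llr P0 P1 y).

(* Chernoff information: - min_{lambda in (0,1)} log sum_x P0^l P1^(1-l),
   written as the supremum of the negated quantity over (0,1). *)
Definition chernoff_info (P0 P1 : X -> R) : R :=
  sup [set - ln (\sum_(x : X) (P0 x `^ l) * (P1 x `^ (1 - l))) | l in `]0, 1[%classic].

(* probability of dataset d = (x_1..x_n) (x_{i+1} = d i) with change point kstar: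
   x_j ~ P0 for j < kstar, x_j ~ P1 for j >= kstar, independent. *)
Definition data_prob (n kstar : nat) (P0 P1 : X -> R) (d : {ffun 'I_n -> X}) : R :=
  \prod_(i < n) (if (i.+1 < kstar)%N then P0 (d i) else P1 (d i)).

Definition cp_score (n : nat) (P0 P1 : X -> R) (d : {ffun 'I_n -> X}) (k : nat) : R :=
  \sum_(i < n | (k <= i.+1)%N) llr P0 P1 (d i).

Definition is_argmax_estimator (n : nat) (P0 P1 : X -> R)
    (khat : {ffun 'I_n -> X} -> nat) : Prop :=
  forall d, (1 <= khat d <= n)%N /\
    (forall k, (1 <= k <= n)%N -> cp_score P0 P1 d k <= cp_score P0 P1 d (khat d)).

Definition miss_prob (n kstar alpha : nat) (P0 P1 : X -> R)
    (khat : {ffun 'I_n -> X} -> nat) : R :=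
  \sum_(d : {ffun 'I_n -> X} | (khat d + alpha < kstar)%N || (kstar + alpha < khat d)%N)
     data_prob kstar P0 P1 d.

End ChangePoint.

(* Main.v *)
Require Import Defs.
From HB Require Import structures.
From mathcomp Require Import all_boot all_order all_algebra.
From mathcomp Require Import all_classical all_reals all_analysis.
From mathcomp Require Import ring lra perm zify.
Import Order.TTheory GRing.Theory Num.Theory.
Local Open Scope ring_scope.
Set Implicit Arguments. Unset Strict Implicit.

Lemma poly_aux (R : realType) (y : R) : 0 <= y -> y <= 1/8 ->
  1 <= (1 + 8*y + 64*y^+2) * (1 - y)^+8.
Proof. move=> h1 h2.
have h3 : 1 - 8*y + 28*y^+2 - 56*y^+3 <= (1-y)^+8.
  rewrite !exprS expr0. nra.
nra.
Qed.

Lemma exp_quad (R : realType) (z : R) : z <= 1 -> expR z <= 1 + z + z^+2.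
Proof.
move=> hz.
have hN : forall w : R, w < 1 -> expR w * (1 - w) <= 1.
  move=> w hw.
  rewrite -{2}(expRxMexpNx_1 w); apply: ler_wpM2l; first exact: expR_ge0.
  exact: expR_ge1Dx.
case: (lerP z 0) => hz0.
  have h1 := hN z (le_lt_trans hz0 ltr01).
  have hp : 0 < 1 - z by lra.
  rewrite -(ler_pM2r hp); apply: (le_trans h1).
  have h3 : 0 <= - z * (z * z) by apply: mulr_ge0; nra.
  rewrite !exprS expr0; nra.
set y := z / 8.
have hy0 : 0 <= y by rewrite /y; lra.
have hy1 : y <= 1/8 by rewrite /y; lra.
have hze : z = 8%:R * y by rewrite /y; lra.
have h8 : expR y * (1 - y) <= 1 by apply: hN; lra.
have hp : 0 < 1 - y by lra.
have hey : expR y <= (1 - y)^-1.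
  by rewrite -(ler_pM2r hp) mulVf ?gt_eqF.
rewrite hze expRM_natl.
have := @poly_aux _ y hy0 hy1 => hpol.
have hq : (1 - y)^-1 ^+ 8 <= 1 + 8 * y + 64 * y ^+ 2.
  have hp8 : 0 < (1 - y) ^+ 8 by apply: exprn_gt0.
  rewrite exprVn -(ler_pM2r hp8) mulVf ?gt_eqF //.
apply: (le_trans (lerXn2r _ _ _ hey)); rewrite ?nnegrE ?expR_ge0 ?invr_ge0 //; first exact: ltW.
apply: (le_trans hq). rewrite -[8%:R]/(8 : R). lra.
Qed.

Lemma hoeff (R : realType) (X : finType) (G Z : X -> R) (C s : R) :
  (forall x, 0 <= G x) -> \sum_x G x = 1 -> (forall x y, Z x - Z y <= s) ->
  0 < C -> 2 * C <= s -> C <= - \sum_x G x * Z x ->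
  \sum_x G x * expR (2 * C / s^+2 * Z x) <= expR (- (C^+2 / s^+2)).
Proof.
move=> G0 G1 hs C0 Cs Cm.
set m := \sum_x G x * Z x.
have s0 : 0 < s by lra.
have sn0 : s != 0 by rewrite gt_eqF.
set mu := 2 * C / s^+2.
have mu0 : 0 < mu by rewrite /mu divr_gt0 ?exprn_gt0 //; lra.
have hm0 : \sum_x G x * (Z x - m) = 0.
  rewrite (eq_bigr (fun x => G x * Z x - m * G x)); last by move=> x _; ring.
  by rewrite sumrB -big_distrr /= G1 mulr1 subrr.
have hZm : forall x, Z x - m <= s.
  move=> x.
  have -> : Z x - m = \sum_y G y * (Z x - Z y).
    rewrite (eq_bigr (fun y => Z x * G y - G y * Z y)); last by move=> y _; ring.
    by rewrite sumrB -big_distrr /= G1 mulr1.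
  apply: (@le_trans _ _ (\sum_y G y * s)).
    by apply: ler_sum => y _; apply: ler_wpM2l.
  by rewrite -big_distrl /= G1 mul1r.
have hz : forall x, mu * (Z x - m) <= 1.
  move=> x; apply: (@le_trans _ _ (mu * s)); first by apply: ler_wpM2l; [exact: ltW|].
  have -> : mu * s = 2 * C / s by rewrite /mu; field.
  by rewrite ler_pdivrMr // mul1r.
have [x0 _] : exists x0 : X, true.
  case: (pickP (fun _ : X => true)) => [x0 _|h]; first by exists x0.
  by move: G1; rewrite big_pred0 // => /eqP; rewrite eq_sym oner_eq0.
have := @arg_minP _ _ X x0 xpredT Z isT; case=> xm _ hxm.
have hV : \sum_x G x * (Z x - m)^+2 <= s^+2 / 4.
  set c := Z xm + s / 2.
  have hc : forall x, (Z x - c)^+2 <= s^+2 / 4.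
    move=> x; have h1 : Z xm <= Z x by exact: hxm.
    have h2 := hs x xm.
    rewrite /c; nra.
  have hE : \sum_x G x * (Z x - c)^+2 =
      \sum_x G x * (Z x - m)^+2 + (m - c)^+2.
    rewrite (eq_bigr (fun x => G x * (Z x - m)^+2 + 2 * (m - c) * (G x * (Z x - m))
                              + (m - c)^+2 * G x)); last by move=> x _; ring.
    by rewrite !big_split /= -!big_distrr /= hm0 G1; ring.
  apply: (@le_trans _ _ (\sum_x G x * (Z x - c)^+2)).
    have := sqr_ge0 (m - c); lra.
  apply: (@le_trans _ _ (\sum_x G x * (s^+2 / 4))).
    by apply: ler_sum => x _; apply: ler_wpM2l.
  by rewrite -big_distrl /= G1 mul1r.
have step1 : \sum_x G x * expR (mu * Z x) =
    expR (mu * m) * \sum_x G x * expR (mu * (Z x - m)).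
  rewrite big_distrr /=; apply: eq_bigr => x _.
  have -> : mu * Z x = mu * m + mu * (Z x - m) by ring.
  by rewrite expRD; ring.
rewrite step1.
have step2 : \sum_x G x * expR (mu * (Z x - m)) <= 1 + mu^+2 * (s^+2 / 4).
  apply: (@le_trans _ _ (\sum_x G x * (1 + mu * (Z x - m) + (mu * (Z x - m))^+2))).
    by apply: ler_sum => x _; apply: ler_wpM2l => //; apply: exp_quad.
  rewrite (eq_bigr (fun x => G x + mu * (G x * (Z x - m)) + mu^+2 * (G x * (Z x - m)^+2)));
    last by move=> x _; ring.
  rewrite !big_split /= -!big_distrr /= hm0 G1 mulr0 addr0 lerD2l.
  by apply: ler_wpM2l => //; apply: exprn_ge0; apply: ltW.
have step3 : 1 + mu^+2 * (s^+2 / 4) <= expR (mu^+2 * (s^+2 / 4)).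
  exact: expR_ge1Dx.
apply: (@le_trans _ _ (expR (mu * m) * expR (mu^+2 * (s^+2 / 4)))).
  apply: ler_wpM2l; first exact: expR_ge0.
  exact: (le_trans step2 step3).
rewrite -expRD ler_expR.
have e1 : mu * C = 2 * (C / s)^+2 by rewrite /mu; field.
have e2 : mu^+2 * (s^+2 / 4) = (C / s)^+2 by rewrite /mu; field.
have e3 : C^+2 / s^+2 = (C / s)^+2 by field.
have e4 : mu * m <= - (mu * C).
  rewrite -mulrN; apply: ler_wpM2l; [exact: ltW| rewrite /m; lra].
rewrite e2 e3; lra.
Qed.

Definition pr (R : realType) (X : finType) (N : nat) (g : 'I_N -> X -> R)
  (d : {ffun 'I_N -> X}) : R := \prod_i g i (d i).
Definition Ex (R : realType) (X : finType) (N : nat) (g : 'I_N -> X -> R)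
  (F : {ffun 'I_N -> X} -> R) : R := \sum_d pr g d * F d.
Definition indep (R : realType) (X : finType) (N : nat) (i : 'I_N)
  (F : {ffun 'I_N -> X} -> R) :=
  forall d d' : {ffun 'I_N -> X}, (forall j, j != i -> d j = d' j) -> F d = F d'.

Lemma Ex_indep (R : realType) (X : finType) (N : nat) (g : 'I_N -> X -> R)
  (i : 'I_N) (F : {ffun 'I_N -> X} -> R) (phi : X -> R) :
  \sum_x g i x = 1 -> indep i F ->
  Ex g (fun d => F d * phi (d i)) = (\sum_x g i x * phi x) * Ex g F.
Proof.
move=> g1 hF.
pose q (d : {ffun 'I_N -> X}) := (\prod_(j | j != i) g j (d j)) * F d.
have hq : indep i q.
  move=> d d' h; rewrite /q (hF d d' h); congr (_ * _).
  by apply: eq_bigr => j hj; rewrite (h j hj).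
have hpr : forall d : {ffun 'I_N -> X}, pr g d = g i (d i) * \prod_(j | j != i) g j (d j).
  by move=> d; rewrite /pr (bigD1 i).
have hsplit : forall h : X -> R,
    \sum_(d : {ffun 'I_N -> X}) h (d i) * q d = \sum_x h x * \sum_(d : {ffun 'I_N -> X} | d i == x) q d.
  move=> h; rewrite (partition_big (fun d : {ffun 'I_N -> X} => d i) xpredT) //=.
  apply: eq_bigr => x _; rewrite big_distrr /=; apply: eq_big => // d /eqP <-.
  done.
have Tc : forall x y, \sum_(d : {ffun 'I_N -> X} | d i == x) q d = \sum_(d : {ffun 'I_N -> X} | d i == y) q d.
  move=> x y.
  pose sg (d : {ffun 'I_N -> X}) : {ffun 'I_N -> X} :=
    [ffun j => if j == i then tperm x y (d i) else d j].
  have sgK : involutive sg.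
    move=> d; apply/ffunP => j; case: (eqVneq j i) => [->|hj].
      by rewrite !ffunE !eqxx tpermK.
    by rewrite !ffunE (negbTE hj).
  rewrite (reindex_inj (inv_inj sgK)); apply: eq_big => d.
    by rewrite ffunE eqxx -[Q in _ == Q](tpermR x y) (inj_eq perm_inj).
  move=> _; apply: hq => j hj; by rewrite ffunE (negbTE hj).
have eL : Ex g (fun d => F d * phi (d i)) =
    \sum_x (g i x * phi x) * \sum_(d : {ffun 'I_N -> X} | d i == x) q d.
  rewrite -(hsplit (fun x => g i x * phi x)) /Ex; apply: eq_bigr => d _.
  by rewrite hpr /q; ring.
have eR : Ex g F = \sum_x g i x * \sum_(d : {ffun 'I_N -> X} | d i == x) q d.
  rewrite -(hsplit (fun x => g i x)) /Ex; apply: eq_bigr => d _.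
  by rewrite hpr /q; ring.
rewrite eL eR big_distrl /=; apply: eq_bigr => x _; congr (_ * _).
rewrite (eq_bigr (fun y => g i y * \sum_(d : {ffun 'I_N -> X} | d i == x) q d)); last first.
  by move=> y _; rewrite (Tc y x).
by rewrite -big_distrl /= g1 mul1r.
Qed.

Definition out (R : realType) (X : finType) (N : nat) (L : nat) (idx : nat -> 'I_N)
  (F : {ffun 'I_N -> X} -> R) :=
  forall d d' : {ffun 'I_N -> X},
    (forall j, (forall k, (k < L)%N -> idx k != j) -> d j = d' j) -> F d = F d'.
Definition injL (N L : nat) (idx : nat -> 'I_N) :=
  forall k k', (k < L)%N -> (k' < L)%N -> idx k = idx k' -> k = k'.
Definition ev (R : realType) (X : finType) (N : nat) (L : nat) (idx : nat -> 'I_N)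
  (Z : X -> R) (W : {ffun 'I_N -> X} -> R) (d : {ffun 'I_N -> X}) : bool :=
  has (fun m => 0 <= W d + \sum_(0 <= k < m) Z (d (idx k))) (iota 0 L.+1).

Lemma out_indep (R : realType) (X : finType) (N L : nat) (idx : nat -> 'I_N)
  (F : {ffun 'I_N -> X} -> R) k : out L idx F -> (k < L)%N -> indep (idx k) F.
Proof.
move=> h hk d d' hd; apply: h => j hj; apply: hd; rewrite eq_sym; exact: hj k hk.
Qed.

Lemma out_shift (R : realType) (X : finType) (N L : nat) (idx : nat -> 'I_N)
  (F : {ffun 'I_N -> X} -> R) : out L.+1 idx F -> out L (fun k => idx k.+1) F.
Proof. move=> h d d' hd; apply: h => j hj; apply: hd => k hk; exact: hj k.+1 hk. Qed.

Lemma out_head (X : finType) (N L : nat) (idx : nat -> 'I_N) (d d' : {ffun 'I_N -> X}) :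
  injL L.+1 idx -> (forall j, (forall k, (k < L)%N -> idx k.+1 != j) -> d j = d' j) ->
  d (idx 0%N) = d' (idx 0%N).
Proof.
move=> hinj hd; apply: hd => k hk; apply/eqP => e.
by have := hinj k.+1 0%N hk (ltn0Sn _) e.
Qed.

Lemma injL_shift (N L : nat) (idx : nat -> 'I_N) :
  injL L.+1 idx -> injL L (fun k => idx k.+1).
Proof. by move=> h k k' hk hk' e; have [] := h k.+1 k'.+1 hk hk' e. Qed.

Lemma Ex_le (R : realType) (X : finType) (N : nat) (g : 'I_N -> X -> R)
  (F G : {ffun 'I_N -> X} -> R) : (forall i x, 0 <= g i x) ->
  (forall d, F d <= G d) -> Ex g F <= Ex g G.
Proof.
move=> g0 h; apply: ler_sum => d _; apply: ler_wpM2l => //.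
by apply: prodr_ge0 => i _.
Qed.

Lemma Ex_ge0 (R : realType) (X : finType) (N : nat) (g : 'I_N -> X -> R)
  (F : {ffun 'I_N -> X} -> R) : (forall i x, 0 <= g i x) ->
  (forall d, 0 <= F d) -> 0 <= Ex g F.
Proof.
move=> g0 h; apply: sumr_ge0 => d _; apply: mulr_ge0 => //.
by apply: prodr_ge0 => i _.
Qed.

Lemma ExD (R : realType) (X : finType) (N : nat) (g : 'I_N -> X -> R)
  (F G : {ffun 'I_N -> X} -> R) :
  Ex g (fun d => F d + G d) = Ex g F + Ex g G.
Proof. by rewrite /Ex -big_split /=; apply: eq_bigr => d _; rewrite mulrDr. Qed.

Lemma Ex1 (R : realType) (X : finType) (N : nat) (g : 'I_N -> X -> R) :
  (forall i, \sum_x g i x = 1) -> Ex g (fun _ => 1) = 1.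
Proof.
move=> g1; rewrite /Ex /pr.
under eq_bigr do rewrite mulr1.
rewrite -(bigA_distr_bigA (fun i x => g i x)) /=.
by apply: big1 => i _; rewrite g1.
Qed.

Lemma Ex_ext (R : realType) (X : finType) (N : nat) (g : 'I_N -> X -> R)
  (F G : {ffun 'I_N -> X} -> R) : (forall d, F d = G d) -> Ex g F = Ex g G.
Proof. by move=> h; rewrite /Ex; apply: eq_bigr => d _; rewrite h. Qed.

Lemma ville (R : realType) (X : finType) (N : nat) (g : 'I_N -> X -> R)
  (Z : X -> R) (mu : R) :
  (forall i x, 0 <= g i x) -> (forall i, \sum_x g i x = 1) -> 0 <= mu ->
  forall L idx, injL L idx ->
  (forall k, (k < L)%N -> \sum_x g (idx k) x * expR (mu * Z x) <= 1) ->
  forall H W, out L idx H -> out L idx W -> (forall d, 0 <= H d) ->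
  Ex g (fun d => H d * (ev L idx Z W d)%:R) <= Ex g (fun d => H d * expR (mu * W d)).
Proof.
move=> g0 g1 mu0; elim=> [|L IH] idx hinj hrho H W hH hW H0.
  apply: Ex_le => // d; rewrite /ev /= big_geq // addr0 orbF.
  case: (lerP 0 (W d)) => hw; rewrite ?mulr1 ?mulr0.
    apply: ler_peMr => //; apply: (le_trans _ (expR_ge1Dx _)).
    by rewrite lerDl mulr_ge0.
  by apply: mulr_ge0 => //; exact: expR_ge0.
pose idx' := fun k => idx k.+1.
pose W' := fun d : {ffun 'I_N -> X} => W d + Z (d (idx 0%N)).
pose H' := fun d : {ffun 'I_N -> X} => H d * (W d < 0)%R%:R.
have hev : forall d, ev L.+1 idx Z W d = (0 <= W d) || ev L idx' Z W' d.
  move=> d; rewrite /ev.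
  have -> : iota 0 L.+2 = 0%N :: [seq (1 + i)%N | i <- iota 0 L.+1] by rewrite -(iotaDl 1 0).
  rewrite -cat1s has_cat has_seq1 big_geq // addr0 has_map; congr (_ || _).
  by apply: eq_in_has => m _ /=; rewrite big_nat_recl // addrA.
have hinj' : injL L idx' by exact: injL_shift.
have hH' : out L idx' H'.
  by move=> d d' hd; rewrite /H' (out_shift hH hd) (out_shift hW hd).
have hW' : out L idx' W'.
  by move=> d d' hd; rewrite /W' (out_shift hW hd) (out_head hinj hd).
have hIH := IH idx' hinj' (fun k hk => hrho k.+1 hk) H' W' hH' hW'.
have H'0 : forall d, 0 <= H' d by move=> d; rewrite /H' mulr_ge0.
apply: (@le_trans _ _ (Ex g (fun d => H d * (0 <= W d)%R%:R + H' d * (ev L idx' Z W' d)%:R))).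
  apply: Ex_le => // d; rewrite hev /H'.
  case: (lerP 0 (W d)) => hw /=; rewrite ?mulr1 ?mulr0 ?add0r ?addr0 ?mul1r ?mul0r ?addr0 //.
rewrite ExD.
apply: (@le_trans _ _ (Ex g (fun d => H d * (0 <= W d)%R%:R) +
                       Ex g (fun d => H' d * expR (mu * W d)))).
  rewrite lerD2l; apply: (le_trans (hIH H'0)).
  have -> : Ex g (fun d => H' d * expR (mu * W' d)) =
      Ex g (fun d => (H' d * expR (mu * W d)) * expR (mu * Z (d (idx 0%N)))).
    by apply: Ex_ext => d; rewrite /W' mulrDr expRD mulrA.
  rewrite (@Ex_indep _ _ _ g (idx 0%N) (fun d => H' d * expR (mu * W d)) (fun x => expR (mu * Z x)) (g1 _)); last first.
    apply: (@out_indep _ _ _ L.+1) => //.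
    by move=> d d' hd; rewrite /H' (hH d d' hd) (hW d d' hd).
  rewrite -[X in _ <= X]mul1r; apply: ler_wpM2r; last exact: hrho.
  apply: Ex_ge0 => // d; apply: mulr_ge0 => //; exact: expR_ge0.
rewrite -ExD; apply: Ex_le => // d; rewrite /H'.
case: (lerP 0 (W d)) => hw /=; rewrite ?mulr1 ?mulr0 ?add0r ?addr0 ?mul1r ?mul0r ?addr0 //.
  apply: ler_peMr => //; apply: (le_trans _ (expR_ge1Dx _)).
  by rewrite lerDl mulr_ge0.
Qed.

Lemma Ex_prod (R : realType) (X : finType) (N : nat) (g : 'I_N -> X -> R)
  (Z : X -> R) (mu : R) :
  (forall i, \sum_x g i x = 1) ->
  forall L idx, injL L idx -> forall F, out L idx F ->
  Ex g (fun d => F d * expR (mu * \sum_(0 <= k < L) Z (d (idx k)))) =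
  (\prod_(0 <= k < L) \sum_x g (idx k) x * expR (mu * Z x)) * Ex g F.
Proof.
move=> g1; elim=> [|L IH] idx hinj F hF.
  rewrite big_geq // mul1r; apply: Ex_ext => d.
  by rewrite big_geq // mulr0 expR0 mulr1.
pose idx' := fun k => idx k.+1.
have -> : Ex g (fun d => F d * expR (mu * \sum_(0 <= k < L.+1) Z (d (idx k)))) =
    Ex g (fun d => (F d * expR (mu * Z (d (idx 0%N)))) *
                   expR (mu * \sum_(0 <= k < L) Z (d (idx' k)))).
  by apply: Ex_ext => d; rewrite big_nat_recl // mulrDr expRD mulrA.
rewrite (IH idx' (injL_shift hinj)); last first.
  by move=> d d' hd; rewrite (out_shift hF hd) (out_head hinj hd).
rewrite (@Ex_indep _ _ _ g (idx 0%N) F (fun x => expR (mu * Z x)) (g1 _)); last first.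
  exact: (@out_indep _ _ _ L.+1).
by rewrite big_nat_recl // mulrA [X in X * _]mulrC.
Qed.

Lemma side_bound (R : realType) (X : finType) (N : nat) (g : 'I_N -> X -> R)
  (Z : X -> R) (mu rho : R) (a Lt : nat) (idx : nat -> 'I_N) :
  (forall i x, 0 <= g i x) -> (forall i, \sum_x g i x = 1) -> 0 <= mu ->
  injL Lt idx ->
  (forall k, (k < Lt)%N -> \sum_x g (idx k) x * expR (mu * Z x) = rho) ->
  0 <= rho -> rho <= 1 ->
  Ex g (fun d => (has (fun m => (a <= m)%N && (0 <= \sum_(0 <= k < m) Z (d (idx k))))
                      (iota 0 Lt.+1))%:R) <= rho ^+ a.
Proof.
move=> g0 g1 mu0 hinj hrho r0 r1.
case: (leqP a Lt) => haL; last first.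
  apply: (@le_trans _ _ (Ex g (fun _ => 0))).
    apply: Ex_le => // d; case: hasP => [[m hm /andP [ham _]]|_]; last by rewrite lexx.
    move: hm; rewrite mem_iota add0n => /andP [_ hm].
    by move: (leq_trans hm haL); rewrite ltnNge ham.
  rewrite /Ex big1 ?exprn_ge0 // => d _; exact: mulr0.
pose W := fun d : {ffun 'I_N -> X} => \sum_(0 <= k < a) Z (d (idx k)).
pose idx2 := fun k => idx (a + k)%N.
have hinj2 : injL (Lt - a) idx2.
  move=> k k' hk hk' e; have := hinj (a + k)%N (a + k')%N.
  have h1 : (a + k < Lt)%N by rewrite -ltn_subRL.
  have h2 : (a + k' < Lt)%N by rewrite -ltn_subRL.
  by move=> /(_ h1 h2 e) /eqP; rewrite eqn_add2l => /eqP.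
apply: (@le_trans _ _ (Ex g (fun d => 1 * (ev (Lt - a) idx2 Z W d)%:R))).
  apply: Ex_le => // d; rewrite mul1r ler_nat.
  case: hasP => // -[m hm /andP [ham hs]].
  have -> : ev (Lt - a) idx2 Z W d = true; last by [].
  apply/hasP; exists (m - a)%N.
    move: hm; rewrite !mem_iota !add0n => /andP [_ hm].
    by rewrite leq0n /= ltnS leq_sub2r // -ltnS.
  move: hs; rewrite (@big_cat_nat _ _ _ a 0 m _ _ (leq0n a) ham) /= /W.
  have e : \sum_(a <= i < m) Z (d (idx i)) = \sum_(0 <= k < m - a) Z (d (idx2 k)).
    by rewrite -{1}(add0n a) big_addn; apply: eq_bigr => k _; rewrite addnC.
  by rewrite e.
apply: (@le_trans _ _ (Ex g (fun d => 1 * expR (mu * W d)))).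
  apply: (ville g0 g1 mu0 hinj2).
  - by move=> k hk; rewrite hrho // -ltn_subRL.
  - by [].
  - move=> d d' hd; rewrite /W; apply: eq_big_nat => k /andP [_ hk].
    congr Z; apply: hd => k' hk'; apply/eqP => e.
    have h1 : (a + k' < Lt)%N by rewrite -ltn_subRL.
    have := hinj _ _ h1 (leq_trans hk haL) e => e2.
    by move: hk; rewrite -e2 ltnNge leq_addr.
  - by [].
rewrite (@Ex_prod _ _ _ g Z mu g1 a idx); last first.
  - by [].
  - move=> k k' hk hk'; apply: hinj; exact: (leq_trans _ haL).
rewrite Ex1 // mulr1.
rewrite (eq_big_nat _ _ (F2 := fun _ => rho)); last first.
  by move=> k /andP [_ hk]; apply: hrho; exact: (leq_trans hk haL).
by rewrite prodr_const_nat subn0.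
Qed.

Local Open Scope classical_set_scope.

Lemma llr_E (R : realType) (X : finType) (P0 P1 : X -> R) x :
  0 < P0 x -> 0 < P1 x -> llr P0 P1 x = ln (P1 x) - ln (P0 x).
Proof.
move=> h0 h1; rewrite /llr lnM ?posrE ?invr_gt0 // lnV ?posrE //.
Qed.

Lemma KL_E (R : realType) (X : finType) (P Q : X -> R) :
  (forall x, 0 < P x) -> (forall x, 0 < Q x) ->
  KL P Q = \sum_x P x * (ln (P x) - ln (Q x)).
Proof.
move=> hP hQ; rewrite /KL; apply: eq_bigr => x _.
by rewrite lnM ?posrE ?invr_gt0 // lnV ?posrE.
Qed.

Lemma KL_pos (R : realType) (X : finType) (P Q : X -> R) :
  full_pmf P -> full_pmf Q -> P <> Q -> 0 < KL P Q.
Proof.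
move=> [hP sP] [hQ sQ] hPQ.
have [x0 hx0] : exists x, P x != Q x.
  case: (pickP (fun x => P x != Q x)) => [x hx|h]; first by exists x.
  exfalso; apply: hPQ; apply: boolp.funext => x; apply/eqP.
  by move: (h x) => /negbFE.
have key : forall x, P x - Q x <= P x * (ln (P x) - ln (Q x)) /\
                     (P x != Q x -> P x - Q x < P x * (ln (P x) - ln (Q x))).
  move=> x; have px := hP x; have qx := hQ x.
  set y := ln (Q x) - ln (P x).
  have ey : expR y = Q x / P x by rewrite expRD expRN !lnK ?posrE.
  have e2 : P x * (ln (P x) - ln (Q x)) = - (P x * y) by rewrite /y; ring.
  rewrite e2; split.
    have := expR_ge1Dx y; rewrite ey ler_pdivlMr // => h; nra.
  move=> hne; have yn0 : y != 0.
    apply/eqP => y0; apply: (negP hne); apply/eqP.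
    have : ln (Q x) = ln (P x) by move: y0; rewrite /y; lra.
    by move/(congr1 expR); rewrite !lnK ?posrE // => ->.
  have := expR_gt1Dx yn0; rewrite ey ltr_pdivlMr // => h; nra.
rewrite KL_E // (bigD1 x0) //=.
have hsum : 0 = (P x0 - Q x0) + \sum_(x | x != x0) (P x - Q x).
  have : \sum_x (P x - Q x) = 0 by rewrite sumrB sP sQ subrr.
  by rewrite (bigD1 x0) //= => <-.
rewrite {1}hsum.
apply: ltr_leD; first by apply: (key x0).2.
by apply: ler_sum => x _; apply: (key x).1.
Qed.

Lemma span_le (R : realType) (X : finType) (P0 P1 : X -> R) x y :
  llr P0 P1 x - llr P0 P1 y <= llr_span P0 P1.
Proof.
rewrite /llr_span.
apply: le_trans (le_bigmax _ _ x).
exact: (le_bigmax _ (fun y => llr P0 P1 x - llr P0 P1 y) y).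
Qed.

Lemma KL_llr0 (R : realType) (X : finType) (P0 P1 : X -> R) :
  (forall x, 0 < P0 x) -> (forall x, 0 < P1 x) ->
  KL P0 P1 = - \sum_x P0 x * llr P0 P1 x.
Proof.
move=> h0 h1; rewrite KL_E // -sumrN; apply: eq_bigr => x _.
rewrite llr_E //; ring.
Qed.

Lemma KL_sum_le (R : realType) (X : finType) (P0 P1 : X -> R) :
  full_pmf P0 -> full_pmf P1 -> KL P0 P1 + KL P1 P0 <= llr_span P0 P1.
Proof.
move=> [h0 s0] [h1 s1].
rewrite KL_llr0 // /KL -/(llr P0 P1) addrC.
set Y := llr P0 P1.
have e : \sum_x P1 x * Y x - \sum_y P0 y * Y y =
    \sum_x \sum_y P1 x * P0 y * (Y x - Y y).
  transitivity (\sum_x (P1 x * Y x - P1 x * \sum_y P0 y * Y y)).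
    by rewrite sumrB -big_distrl /= s1 mul1r.
  apply: eq_bigr => x _.
  rewrite [RHS](eq_bigr (fun y => P1 x * Y x * P0 y - P1 x * (P0 y * Y y))); last first.
    by move=> y _; ring.
  by rewrite sumrB -!big_distrr /= s0 mulr1.
rewrite e.
apply: (@le_trans _ _ (\sum_x \sum_y P1 x * P0 y * llr_span P0 P1)).
  apply: ler_sum => x _; apply: ler_sum => y _; apply: ler_wpM2l.
    by apply: mulr_ge0; apply: ltW.
  exact: span_le.
rewrite (eq_bigr (fun x => P1 x * llr_span P0 P1)); last first.
  by move=> x _; rewrite -big_distrl -big_distrr /= s0 mulr1.
by rewrite -big_distrl /= s1 mul1r.
Qed.

Lemma chi_E (R : realType) (X : finType) (P0 P1 : X -> R) l x :
  0 < P0 x -> 0 < P1 x ->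
  P0 x `^ l * P1 x `^ (1 - l) = expR (l * ln (P0 x) + (1 - l) * ln (P1 x)).
Proof. by move=> h0 h1; rewrite /powR !gt_eqF // expRD. Qed.

Lemma rho1_chi (R : realType) (X : finType) (P0 P1 : X -> R) l x :
  0 < P0 x -> 0 < P1 x ->
  P0 x * expR ((1 - l) * llr P0 P1 x) = expR (l * ln (P0 x) + (1 - l) * ln (P1 x)).
Proof.
move=> h0 h1; rewrite llr_E // -{1}[P0 x]lnK ?posrE // -expRD; congr expR; ring.
Qed.

Lemma rho2_chi (R : realType) (X : finType) (P0 P1 : X -> R) l x :
  0 < P0 x -> 0 < P1 x ->
  P1 x * expR (l * - llr P0 P1 x) = expR (l * ln (P0 x) + (1 - l) * ln (P1 x)).
Proof.
move=> h0 h1; rewrite llr_E // -{1}[P1 x]lnK ?posrE // -expRD; congr expR; ring.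
Qed.

Lemma chern_bound (R : realType) (X : finType) (P0 P1 : X -> R) (al : nat) (v : R) :
  full_pmf P0 -> full_pmf P1 -> (0 < al)%N ->
  (forall l, 0 < l -> l < 1 ->
     v <= (\sum_x expR (l * ln (P0 x) + (1 - l) * ln (P1 x))) ^+ al) ->
  v <= expR (- (al%:R * chernoff_info P0 P1)).
Proof.
move=> [h0 s0] [h1 s1] al0 hv.
pose chi l := \sum_x expR (l * ln (P0 x) + (1 - l) * ln (P1 x)).
have [x0 _] : exists x0 : X, true.
  case: (pickP (fun _ : X => true)) => [x _|h]; first by exists x.
  by move: s0; rewrite big_pred0 // => /eqP; rewrite eq_sym oner_eq0.
have chiE : forall l, \sum_x P0 x `^ l * P1 x `^ (1 - l) = chi l.
  by move=> l; apply: eq_bigr => x _; rewrite chi_E.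
set B := `|ln (P0 x0)| + `|ln (P1 x0)|.
have chi_ge : forall l, 0 < l -> l < 1 -> expR (- B) <= chi l.
  move=> l l0 l1; rewrite /chi (bigD1 x0) //=.
  apply: (@le_trans _ _ (expR (l * ln (P0 x0) + (1 - l) * ln (P1 x0)))).
    rewrite ler_expR.
    have ha' : - `|ln (P0 x0)| <= ln (P0 x0) by by rewrite lerNl -normrN ler_norm.
    have hb' : - `|ln (P1 x0)| <= ln (P1 x0) by by rewrite lerNl -normrN ler_norm.
    have n1 := normr_ge0 (ln (P0 x0)); have n2 := normr_ge0 (ln (P1 x0)).
    have p1 : 0 <= l * (ln (P0 x0) + `|ln (P0 x0)|) by apply: mulr_ge0; lra.
    have p2 : 0 <= (1 - l) * (ln (P1 x0) + `|ln (P1 x0)|) by apply: mulr_ge0; lra.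
    have p3 : 0 <= (1 - l) * `|ln (P0 x0)| by apply: mulr_ge0; lra.
    have p4 : 0 <= l * `|ln (P1 x0)| by apply: mulr_ge0; lra.
    rewrite /B; nra.
  by rewrite lerDl; apply: sumr_ge0 => x _; exact: expR_ge0.
have chi_gt0 : forall l, 0 < l -> l < 1 -> 0 < chi l.
  by move=> l l0 l1; apply: lt_le_trans (chi_ge l l0 l1); exact: expR_gt0.
set S := [set - ln (\sum_x P0 x `^ l * P1 x `^ (1 - l)) | l in `]0, 1[%classic].
have hS : forall e, S e -> exists l, [/\ 0 < l, l < 1 & e = - ln (chi l)].
  move=> e [l hl <-]; exists l; rewrite chiE.
  by move: hl; rewrite /= in_itv /= => /andP [].
have hsup : has_sup S.
  split.
    exists (- ln (chi (1/2))); exists (1/2); last by rewrite chiE.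
    by rewrite /= in_itv /=; apply/andP; split; lra.
  exists B => e /hS [l [l0 l1 ->]].
  rewrite lerNl -[X in X <= _](expRK) ler_ln ?posrE ?expR_gt0 ?chi_gt0 //.
  exact: chi_ge.
rewrite /chernoff_info -/S.
set I := sup S.
case: (lerP v (expR (- (al%:R * I)))) => // hlt; exfalso.
have v0 : 0 < v by apply: lt_trans hlt; exact: expR_gt0.
have al0' : 0 < (al%:R : R) by rewrite ltr0n.
have hlnv : - (al%:R * I) < ln v.
  by rewrite -[X in X < _]expRK ltr_ln ?posrE ?expR_gt0.
pose eps := (ln v + al%:R * I) / al%:R.
have eps0 : 0 < eps by rewrite /eps divr_gt0 //; lra.
have [e Se he] := sup_adherent eps0 hsup.
have [l [l0 l1 ee]] := hS e Se.
have hv1 := hv l l0 l1.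
have hchi : chi l ^+ al = expR (al%:R * ln (chi l)).
  by rewrite expRM_natl lnK ?posrE ?chi_gt0.
have e2 : - (al%:R * (I - eps)) = ln v by rewrite /eps; field; lra.
have h3 : expR (al%:R * ln (chi l)) < v.
  rewrite -[v]lnK ?posrE // -e2 ltr_expR -mulrN ltr_pM2l //.
  rewrite -/I in he; lra.
have h4 : v < v by apply: (le_lt_trans hv1); rewrite -/(chi l) hchi.
by rewrite ltxx in h4.
Qed.

Lemma ord_range (R : realType) (n : nat) (G : nat -> R) (a b : nat) :
  (a <= b)%N -> (b <= n)%N ->
  \sum_(i < n | (a <= i < b)%N) G i = \sum_(a <= i < b) G i.
Proof.
move=> hab hbn.
rewrite -(big_mkord (fun i => (a <= i < b)%N) G).
rewrite (@big_cat_nat _ _ _ a 0 n _ _ (leq0n a) (leq_trans hab hbn)) /=.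
rewrite big_nat_cond big1 ?add0r; last first.
  move=> i /andP [/andP [_ hi] /andP [hai _]].
  by move: (leq_trans hi hai); rewrite ltnn.
rewrite (big_nat_widen a b n) // big_nat_cond [RHS]big_nat_cond.
apply: eq_bigl => i; apply/idP/idP => /andP [/andP [h1 h2] /andP [h3 h4]];
  by rewrite h1 h2 ?h3 ?h4.
Qed.

Lemma sum_rev (R : realType) (G : nat -> R) (a b : nat) : (a <= b)%N ->
  \sum_(a <= i < b) G i = \sum_(0 <= j < b - a) G (b.-1 - j)%N.
Proof.
move=> hab; rewrite big_nat_rev.
rewrite -{1}(add0n a) big_addn; apply: eq_big_nat => j /andP [_ hj].
congr G; lia.
Qed.

Lemma sum_fwd (R : realType) (G : nat -> R) (a b : nat) :
  \sum_(a <= i < b) G i = \sum_(0 <= j < b - a) G (a + j)%N.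
Proof. by rewrite -{1}(add0n a) big_addn; apply: eq_bigr => j _; rewrite addnC. Qed.

Lemma score_split (R : realType) (X : finType) (n : nat) (P0 P1 : X -> R)
  (d : {ffun 'I_n -> X}) (k k' : nat) : (k <= k')%N ->
  cp_score P0 P1 d k = \sum_(i < n | (k <= i.+1 < k')%N) llr P0 P1 (d i) + cp_score P0 P1 d k'.
Proof.
move=> hkk'; rewrite /cp_score (bigID (fun i : 'I_n => (i.+1 < k')%N)) /=.
congr (_ + _); apply: eq_bigl => i.
rewrite -leqNgt; case h: (k' <= i.+1)%N; rewrite ?andbT ?andbF //.
exact: leq_trans hkk' h.
Qed.

Lemma ord_nat (R : realType) (X : finType) (n : nat) (i0 : 'I_n) (d : {ffun 'I_n -> X})
  (Y : X -> R) (P : nat -> bool) :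
  \sum_(i < n | P i) Y (d i) = \sum_(i < n | P i) Y (d (insubd i0 (i : nat))).
Proof. by apply: eq_bigr => i _; rewrite valKd. Qed.

Lemma event1 (R : realType) (X : finType) (P0 P1 : X -> R) (n kstar al : nat)
  (khat : {ffun 'I_n -> X} -> nat) (i0 : 'I_n) (d : {ffun 'I_n -> X}) :
  (1 < kstar <= n)%N -> is_argmax_estimator P0 P1 khat -> (khat d + al < kstar)%N ->
  has (fun m => (al.+1 <= m)%N &&
         (0 <= \sum_(0 <= k < m) llr P0 P1 (d (insubd i0 (kstar.-2 - k)%N))))
      (iota 0 kstar.-1.+1).
Proof.
move=> /andP [hk1 hkn] ham hlt.
have [/andP [hk0 hkn'] hmax] := ham d.
have hsc := hmax kstar (ltac:(apply/andP; split => //; exact: ltnW)).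
move: hk0 hkn' hlt hsc; set k := khat d => hk0 hkn' hlt hsc.
apply/hasP; exists (kstar - k)%N.
  by rewrite mem_iota; apply/andP; split; lia.
apply/andP; split; first by lia.
have e : \sum_(0 <= j < kstar - k) llr P0 P1 (d (insubd i0 (kstar.-2 - j)%N)) =
    cp_score P0 P1 d k - cp_score P0 P1 d kstar.
  rewrite (@score_split _ _ _ _ _ d k kstar); last by lia.
  rewrite addrK (@ord_nat R X n i0 d (llr P0 P1) (fun j => (k <= j.+1 < kstar)%N)).
  rewrite (eq_bigl (fun i : 'I_n => (k.-1 <= i < kstar.-1)%N)); last first.
    by move=> i /=; apply/idP/idP => /andP [] *; apply/andP; split; lia.
  rewrite (@ord_range R n (fun j => llr P0 P1 (d (insubd i0 j)))); [|lia|lia].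
  rewrite [RHS]sum_rev; last by lia.
  by have -> : (kstar.-1 - k.-1 = kstar - k)%N by lia.
by rewrite e subr_ge0.
Qed.

Lemma event2 (R : realType) (X : finType) (P0 P1 : X -> R) (n kstar al : nat)
  (khat : {ffun 'I_n -> X} -> nat) (i0 : 'I_n) (d : {ffun 'I_n -> X}) :
  (1 < kstar <= n)%N -> is_argmax_estimator P0 P1 khat -> (kstar + al < khat d)%N ->
  has (fun m => (al.+1 <= m)%N &&
         (0 <= \sum_(0 <= k < m) - llr P0 P1 (d (insubd i0 (kstar.-1 + k)%N))))
      (iota 0 (n - kstar).+1).
Proof.
move=> /andP [hk1 hkn] ham hlt.
have [/andP [hk0 hkn'] hmax] := ham d.
have hsc := hmax kstar (ltac:(apply/andP; split => //; exact: ltnW)).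
move: hk0 hkn' hlt hsc; set k := khat d => hk0 hkn' hlt hsc.
apply/hasP; exists (k - kstar)%N.
  by rewrite mem_iota; apply/andP; split; lia.
apply/andP; split; first by lia.
have e : \sum_(0 <= j < k - kstar) llr P0 P1 (d (insubd i0 (kstar.-1 + j)%N)) =
    cp_score P0 P1 d kstar - cp_score P0 P1 d k.
  rewrite (@score_split _ _ _ _ _ d kstar k); last by lia.
  rewrite addrK (@ord_nat R X n i0 d (llr P0 P1) (fun j => (kstar <= j.+1 < k)%N)).
  rewrite (eq_bigl (fun i : 'I_n => (kstar.-1 <= i < k.-1)%N)); last first.
    by move=> i /=; apply/idP/idP => /andP [] *; apply/andP; split; lia.
  rewrite (@ord_range R n (fun j => llr P0 P1 (d (insubd i0 j)))); [|lia|lia].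
  rewrite [RHS]sum_fwd.
  by have -> : (k.-1 - kstar.-1 = k - kstar)%N by lia.
by rewrite sumrN e opprB subr_ge0.
Qed.

Lemma val_insubd_lt (n : nat) (i0 : 'I_n) (x : nat) : (x < n)%N -> val (insubd i0 x) = x.
Proof. by move=> h; rewrite val_insubd h. Qed.

Local Close Scope classical_set_scope.
Unset Implicit Arguments.

Theorem corollary3p2 (R : realType) (X : finType) (P0 P1 : X -> R)
  (n kstar alpha : nat) (khat : {ffun 'I_n -> X} -> nat) :
  full_pmf P0 -> full_pmf P1 -> P0 <> P1 ->
  (1 < n)%N -> (1 < kstar <= n)%N ->
  is_argmax_estimator P0 P1 khat ->
  (1 <= alpha <= n)%N ->
  let s := llr_span P0 P1 in
  let C := Num.min (KL P0 P1) (KL P1 P0) in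
  let t := expR (- (alpha%:R * C ^+ 2 / s ^+ 2)) in
  let M := ((n - 1) %/ alpha)%N in
  miss_prob kstar alpha P0 P1 khat
    <= 2 * Num.min (t * (1 - t ^+ M) / (1 - t))
                   (expR (- (alpha%:R * chernoff_info P0 P1))).
Proof.
move=> fP0 fP1 hne hn hk ham hal; cbv zeta.
set s := llr_span P0 P1.
set C := Num.min (KL P0 P1) (KL P1 P0).
set t := expR (- (alpha%:R * C ^+ 2 / s ^+ 2)).
set M := ((n - 1) %/ alpha)%N.
have [h0 s0] := fP0; have [h1 s1] := fP1.
have /andP [hk1 hkn] := hk.
have /andP [hal1 haln] := hal.
pose i0 : 'I_n := Ordinal (ltnW hn).
pose Y := llr P0 P1.
pose g := fun (i : 'I_n) => if (i.+1 < kstar)%N then P0 else P1.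
have g0 : forall i x, 0 <= g i x by move=> i x; rewrite /g; case: ifP => _; apply: ltW.
have g1 : forall i, \sum_x g i x = 1 by move=> i; rewrite /g; case: ifP.
have hdp : forall d, data_prob kstar P0 P1 d = pr g d.
  by move=> d; rewrite /data_prob /pr; apply: eq_bigr => i _; rewrite /g; case: ifP.
pose idx1 := fun k => insubd i0 (kstar.-2 - k)%N.
pose idx2 := fun k => insubd i0 (kstar.-1 + k)%N.
pose E1 := fun d : {ffun 'I_n -> X} =>
  has (fun m => (alpha.+1 <= m)%N && (0 <= \sum_(0 <= k < m) Y (d (idx1 k))))
      (iota 0 kstar.-1.+1).
pose E2 := fun d : {ffun 'I_n -> X} =>
  has (fun m => (alpha.+1 <= m)%N && (0 <= \sum_(0 <= k < m) - Y (d (idx2 k))))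
      (iota 0 (n - kstar).+1).
have hmiss : miss_prob kstar alpha P0 P1 khat <=
    Ex g (fun d => (E1 d)%:R) + Ex g (fun d => (E2 d)%:R).
  rewrite /miss_prob -ExD /Ex big_mkcond /=; apply: ler_sum => d _; rewrite hdp.
  have pr0 : 0 <= pr g d by apply: prodr_ge0 => i _.
  case: ifP => hc; last by apply: mulr_ge0 => //; apply: addr_ge0.
  have : (E1 d || E2 d).
    case/orP: hc => hc.
      have He : E1 d := @event1 R X P0 P1 n kstar alpha khat i0 d hk ham hc.
      by rewrite He.
    have He : E2 d := @event2 R X P0 P1 n kstar alpha khat i0 d hk ham hc.
    by rewrite He orbT.
  case: (E1 d); case: (E2 d) => //= _. all: rewrite ?mulr1 ?addr0 ?add0r ?mulr1 ?mulr0 //.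
    apply: ler_peMr => //; lra.
have inj1 : injL kstar.-1 idx1.
  move=> k k' hk' hk'' /(congr1 val); rewrite /idx1 !val_insubd_lt; lia.
have inj2 : injL (n - kstar) idx2.
  move=> k k' hk' hk'' /(congr1 val); rewrite /idx2 !val_insubd_lt; lia.
have rho1E : forall mu k, (k < kstar.-1)%N ->
    \sum_x g (idx1 k) x * expR (mu * Y x) = \sum_x P0 x * expR (mu * Y x).
  move=> mu k hk'; rewrite /g /idx1 val_insubd_lt; last by lia.
  by rewrite ifT //; lia.
have rho2E : forall mu k, (k < n - kstar)%N ->
    \sum_x g (idx2 k) x * expR (mu * - Y x) = \sum_x P1 x * expR (mu * - Y x).
  move=> mu k hk'; rewrite /g /idx2 val_insubd_lt; last by lia.
  by rewrite ifF //; lia.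
have side1 : forall mu, 0 <= mu -> \sum_x P0 x * expR (mu * Y x) <= 1 ->
    Ex g (fun d => (E1 d)%:R) <= (\sum_x P0 x * expR (mu * Y x)) ^+ alpha.+1.
  move=> mu mu0 r1.
  apply: (@side_bound R X n g Y mu _ alpha.+1 kstar.-1 idx1 g0 g1 mu0 inj1) => //.
    by move=> k hk'; apply: rho1E.
  by apply: sumr_ge0 => x _; apply: mulr_ge0; [apply: ltW|apply: expR_ge0].
have side2 : forall mu, 0 <= mu -> \sum_x P1 x * expR (mu * - Y x) <= 1 ->
    Ex g (fun d => (E2 d)%:R) <= (\sum_x P1 x * expR (mu * - Y x)) ^+ alpha.+1.
  move=> mu mu0 r1.
  apply: (@side_bound R X n g (fun x => - Y x) mu _ alpha.+1 (n - kstar) idx2 g0 g1 mu0 inj2) => //.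
    by move=> k hk'; apply: rho2E.
  by apply: sumr_ge0 => x _; apply: mulr_ge0; [apply: ltW|apply: expR_ge0].
have Ele1 : forall E : {ffun 'I_n -> X} -> bool, Ex g (fun d => (E d)%:R) <= 1.
  move=> E; rewrite -[Q in _ <= Q](Ex1 g1); apply: Ex_le => // d; by case: (E d); rewrite ?mulr1n ?mulr0n ?lexx ?ler01.
have gen : forall v r : R, 0 <= r -> v <= 1 -> (r <= 1 -> v <= r ^+ alpha.+1) ->
    v <= r ^+ alpha.
  move=> v r r0 v1 h; case: (lerP r 1) => hr.
    by apply: le_trans (h hr) _; rewrite exprS ler_piMl // exprn_ge0.
  by apply: le_trans v1 _; apply: exprn_ege1; apply: ltW.
have sum_ge0 : forall (P : X -> R) (f : X -> R), (forall x, 0 < P x) ->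
    0 <= \sum_x P x * expR (f x).
  by move=> P f hP; apply: sumr_ge0 => x _; apply: mulr_ge0; [apply: ltW|apply: expR_ge0].
set B := expR (- (alpha%:R * chernoff_info P0 P1)).
have C1 : Ex g (fun d => (E1 d)%:R) <= B.
  apply: (chern_bound fP0 fP1 hal1) => l l0 l1.
  have e : \sum_x P0 x * expR ((1 - l) * Y x) =
      \sum_x expR (l * ln (P0 x) + (1 - l) * ln (P1 x)).
    by apply: eq_bigr => x _; rewrite rho1_chi.
  rewrite -e; apply: gen; [exact: sum_ge0| exact: Ele1|].
  by move=> r1; apply: side1 => //; lra.
have C2 : Ex g (fun d => (E2 d)%:R) <= B.
  apply: (chern_bound fP0 fP1 hal1) => l l0 l1.
  have e : \sum_x P1 x * expR (l * - Y x) =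
      \sum_x expR (l * ln (P0 x) + (1 - l) * ln (P1 x)).
    by apply: eq_bigr => x _; rewrite rho2_chi.
  rewrite -e; apply: gen; [exact: sum_ge0| exact: Ele1|].
  by move=> r1; apply: side2 => //; lra.
have KL0 : 0 < KL P0 P1 := KL_pos fP0 fP1 hne.
have KL1 : 0 < KL P1 P0 := KL_pos fP1 fP0 (fun e => hne (esym e)).
have C0 : 0 < C by rewrite /C lt_min KL0 KL1.
have CK0 : C <= KL P0 P1 by rewrite /C ge_min lexx.
have CK1 : C <= KL P1 P0 by rewrite /C ge_min lexx orbT.
have Cs : 2 * C <= s by have := KL_sum_le fP0 fP1; rewrite -/s; lra.
have s0' : 0 < s by lra.
have hY : forall x y, Y x - Y y <= s by move=> x y; exact: span_le.
have H1 : \sum_x P0 x * expR (2 * C / s^+2 * Y x) <= expR (- (C^+2 / s^+2)).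
  apply: hoeff => //; first by move=> x; apply: ltW.
  by rewrite -KL_llr0.
have H2 : \sum_x P1 x * expR (2 * C / s^+2 * - Y x) <= expR (- (C^+2 / s^+2)).
  apply: (@hoeff R X P1 (fun x => - Y x)) => //; first by move=> x; apply: ltW.
    by move=> x y; have := hY y x; lra.
  rewrite (eq_bigr (fun x => - (P1 x * Y x))); last by move=> x _; rewrite mulrN.
  by rewrite sumrN opprK.
have eC : expR (- (C^+2 / s^+2)) ^+ alpha = t.
  by rewrite /t -expRM_natl; congr expR; rewrite mulrN !mulrA.
have mu0 : 0 <= 2 * C / s^+2 by apply: divr_ge0; [lra| apply: exprn_ge0; lra].
have eh1 : expR (- (C^+2 / s^+2)) <= 1.
  rewrite expR_le1 oppr_le0; apply: divr_ge0; apply: exprn_ge0; lra.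
have T1 : Ex g (fun d => (E1 d)%:R) <= t.
  rewrite -eC; apply: le_trans (gen _ _ (sum_ge0 _ _ h0) (Ele1 E1) (fun h => side1 _ mu0 h)) _.
  by apply: lerXn2r; rewrite ?nnegrE ?sum_ge0 ?expR_ge0.
have T2 : Ex g (fun d => (E2 d)%:R) <= t.
  rewrite -eC; apply: le_trans (gen _ _ (sum_ge0 _ _ h1) (Ele1 E2) (fun h => side2 _ mu0 h)) _.
  by apply: lerXn2r; rewrite ?nnegrE ?sum_ge0 ?expR_ge0.
have t0 : 0 < t by apply: expR_gt0.
have tlt1 : t < 1.
  rewrite /t expR_lt1 oppr_lt0; apply: divr_gt0; last exact: exprn_gt0.
  by apply: mulr_gt0; [rewrite ltr0n | exact: exprn_gt0].
case: (leqP alpha (n - 1)) => hM.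
  have M1 : (0 < M)%N by rewrite /M divn_gt0.
  have At : t <= t * (1 - t ^+ M) / (1 - t).
    rewrite ler_pdivlMr ?subr_gt0 //; apply: ler_wpM2l; first exact: ltW.
    rewrite lerD2l lerN2 -(prednK M1) exprS; apply: ler_piMr; first exact: ltW.
    by apply: exprn_ile1; apply: ltW.
  rewrite minEle; case: ifP => _; apply: (le_trans hmiss); rewrite mulr_natl mulr2n;
    apply: lerD.
  - exact: le_trans T1 At.
  - exact: le_trans T2 At.
  - exact: C1.
  - exact: C2.
rewrite /M divn_small; last exact: hM.
rewrite expr0 subrr mulr0 mul0r minEle ifT; last exact: expR_ge0.
rewrite mulr0 /miss_prob big1 // => d hc; exfalso.
have [/andP [_ hkd] _] := ham d.
by case/orP: hc => hc; clear -hc hkd hM hkn hk1; lia.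
Qed.
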